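(* Let $(G,k)$ be an instance of PITVD and let $x$ be a vertex such that there are $\ell\ge4$ distinct pendant trees $C_1,\dots,C_\ell$ attached to $x$. Let $Z=\bigcup_{j=4}^{\ell}C_j$. Then $(G,k)$ is a yes-instance of PITVD if and only if $(G-Z,k)$ is a yes-instance of PITVD.
   Context: PITVD: the input is an undirected multigraph $G$ (no self-loops) and an integer $k$; the question is whether there exists $X\subseteq V(G)$ with $|X|\le k$ such that $G-X$ is a simple graph and every connected component of $G-X$ is a proper interval graph or a tree. If $x$ is a cut vertex of $G$ and $C$ is a connected component of $G-x$ that is a tree such that $C\cup\{x\}$ induces a tree in $G$, then $C$ is called a pendant tree attached to $x$. *)

(* Defs.v *)
From mathcomp Require Import all_boot all_order all_algebra.
Set Implicit Arguments. Unset Strict Implicit. Unset Printing Implicit Defensive.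
Import Order.TTheory GRing.Theory Num.Theory.

(* A finite undirected multigraph on the vertex type T is given by an
   edge-multiplicity function m : T -> T -> nat (symmetric, zero diagonal =
   no self-loops).  Graphs are considered together with a vertex set
   V : {set T}; the induced sub(multi)graph on S uses the same m restricted
   to S. *)

Section Defs.
Variable T : finType.
Variable m : T -> T -> nat.

Definition adj (y z : T) : bool := 0 < m y z.

Definition relIn (S : {set T}) : rel T :=
  [rel y z | [&& y \in S, z \in S & adj y z]].

Definition connectedIn (S : {set T}) : bool :=
  [forall u in S, forall v in S, connect (relIn S) u v].

Definition simpleIn (S : {set T}) : Prop :=
  forall y z, y \in S -> z \in S -> m y z <= 1.

Definition component (S C : {set T}) : bool :=
  [&& C \subset S, C != set0, connectedIn C &
      [forall y in C, forall z in S, adj y z ==> (z \in C)]].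

Definition ncomp (S : {set T}) : nat := #|[set C : {set T} | component S C]|.

Definition acyclicIn (S : {set T}) : Prop :=
  ~ exists s : seq T,
      [/\ uniq s, 2 < size s, all (fun v => v \in S) s & cycle (relIn S) s].

Definition treeIn (S : {set T}) : Prop :=
  [/\ S != set0, simpleIn S, connectedIn S & acyclicIn S].

Definition proper_intervalIn (S : {set T}) : Prop :=
  simpleIn S /\
  exists l r : T -> rat,
    [/\ (forall v, v \in S -> (l v <= r v)%R),
        (forall u v, u \in S -> v \in S -> u != v ->
           (adj u v <-> ((l u <= r v)%R /\ (l v <= r u)%R))) &
        (forall u v, u \in S -> v \in S ->
           ~ [/\ (l u <= l v)%R, (r v <= r u)%R & ((l u < l v)%R \/ (r v < r u)%R)])].

Definition cut_vertex (V : {set T}) (x : T) : Prop :=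
  x \in V /\ ncomp V < ncomp (V :\ x).

Definition pendant_tree (V : {set T}) (x : T) (C : {set T}) : Prop :=
  [/\ cut_vertex V x, component (V :\ x) C, treeIn C & treeIn (x |: C)].

Definition PITVD (V : {set T}) (k : nat) : Prop :=
  exists X : {set T},
    [/\ X \subset V, #|X| <= k, simpleIn (V :\: X) &
        forall C, component (V :\: X) C -> proper_intervalIn C \/ treeIn C].

End Defs.

(* Main.v *)
Require Import Defs.
From mathcomp Require Import all_boot all_order all_algebra.
From mathcomp Require Import lra zify.
Set Implicit Arguments. Unset Strict Implicit. Unset Printing Implicit Defensive.
Import Order.TTheory GRing.Theory Num.Theory.

Section Claw.
Local Open Scope ring_scope.
Lemma dis (a b c d : rat) : ~ (a <= b /\ c <= d) -> b < a \/ d < c.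
Proof. move=> H; case: (leP a b) => h1; last by left. case: (leP c d) => h2; last by right. by case: H. Qed.
Lemma claw (lx rx l1 r1 l2 r2 l3 r3 : rat) :
  l1 <= r1 -> l2 <= r2 -> l3 <= r3 ->
  lx <= r1 -> l1 <= rx -> lx <= r2 -> l2 <= rx -> lx <= r3 -> l3 <= rx ->
  ~ (l1 <= r2 /\ l2 <= r1) -> ~ (l1 <= r3 /\ l3 <= r1) -> ~ (l2 <= r3 /\ l3 <= r2) ->
  ~ [/\ lx <= l1, r1 <= rx & (lx < l1 \/ r1 < rx)] ->
  ~ [/\ lx <= l2, r2 <= rx & (lx < l2 \/ r2 < rx)] ->
  ~ [/\ lx <= l3, r3 <= rx & (lx < l3 \/ r3 < rx)] -> False.
Proof.
move=> ? ? ? ? ? ? ? ? ? /dis h12 /dis h13 /dis h23 c1 c2 c3.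
case: h12 => ?; case: h13 => ?; case: h23 => ?;
first [ lra | (apply: c1; split; [lra|lra|left; lra]) | (apply: c2; split; [lra|lra|left; lra])
   | (apply: c3; split; [lra|lra|left; lra]) ].
Qed.
End Claw.
Section Aux.
Variable T : finType.
Variable m : T -> T -> nat.
Hypothesis msym : forall y z, m y z = m z y.
Hypothesis mloop : forall y, m y y = 0.

Lemma adjC y z : adj m y z = adj m z y.
Proof. by rewrite /adj msym. Qed.

Lemma relInC (S : {set T}) : symmetric (relIn m S).
Proof. by move=> y z; rewrite /relIn /= adjC; case: (y \in S); case: (z \in S). Qed.

Lemma relIn_sub (D S : {set T}) : D \subset S -> subrel (relIn m D) (relIn m S).
Proof.
by move=> DS y z /and3P[yD zD a]; rewrite /relIn /= (subsetP DS _ yD) (subsetP DS _ zD).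
Qed.

Definition closedIn (S K : {set T}) :=
  forall y z, y \in K -> z \in S -> adj m y z -> z \in K.

Lemma comp_closed (S K : {set T}) : component m S K -> closedIn S K.
Proof.
move=> /and4P[_ _ _ /forall_inP H] y z yK zS ayz.
by have /forall_inP/(_ z zS)/implyP := H y yK; apply.
Qed.

Lemma path_closed (S K : {set T}) a p : a \in K -> closedIn S K ->
  path (relIn m S) a p -> all (fun v => v \in K) p.
Proof.
elim: p a => [|b p IH] a aK cK //=.
case/andP=> /and3P[aS bS ab] Hp.
have bK : b \in K := cK a b aK bS ab.
by rewrite bK (IH b bK cK Hp).
Qed.

Lemma conn_closed (S K D : {set T}) u v : D \subset S -> closedIn S K -> u \in K ->
  connect (relIn m D) u v -> v \in K.
Proof.
move=> DS cK uK /connectP[p Hp ->].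
have HS : path (relIn m S) u p := sub_path (relIn_sub DS) Hp.
have /allP H := path_closed uK cK HS.
by have := mem_last u p; rewrite inE => /orP[/eqP->|/H].
Qed.

Lemma conn_in_closed (S K D : {set T}) u : D \subset S -> closedIn S K -> connectedIn m D ->
  u \in D -> u \in K -> D \subset K.
Proof.
move=> DS cK /forall_inP cD uD uK; apply/subsetP=> v vD.
have /forall_inP/(_ v vD) := cD u uD.
exact: conn_closed DS cK uK.
Qed.

Lemma comp_of (S D : {set T}) v : D \subset S -> connectedIn m D -> v \in D ->
  exists K, component m S K /\ D \subset K.
Proof.
move=> DS cD vD.
have vS : v \in S := subsetP DS _ vD.
set K := [set w in S | connect (relIn m S) v w].
have vK : v \in K by rewrite inE vS connect0.
have Hp : forall a p, a \in K -> path (relIn m S) a p -> path (relIn m K) a p.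
  move=> a p; elim: p a => [|b p IH] a aK //=.
  case/andP=> /and3P[aS bS ab] Hp.
  have bK : b \in K.
    rewrite inE bS; move: aK; rewrite inE => /andP[_ cva].
    by apply: connect_trans cva (connect1 _); rewrite /relIn /= aS bS.
  by rewrite /= {1}/relIn /= aK bK ab (IH b bK Hp).
have Hv : forall w, w \in K -> connect (relIn m K) v w.
  move=> w; rewrite inE => /andP[_ /connectP[p P1 ->]].
  by apply/connectP; exists p => //; apply: Hp.
exists K; split.
  apply/and4P; split.
  - by apply/subsetP=> w; rewrite inE => /andP[].
  - by apply/set0Pn; exists v.
  - apply/forall_inP=> u uK; apply/forall_inP=> w wK.
    apply: connect_trans (Hv w wK).
    by rewrite (sym_connect_sym (@relInC K)) Hv.
  - apply/forall_inP=> y yK; apply/forall_inP=> z zS; apply/implyP=> ayz.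
    move: yK; rewrite !inE zS => /andP[yS cy].
    by apply: connect_trans cy (connect1 _); rewrite /relIn /= yS zS.
apply/subsetP=> u uD; rewrite inE (subsetP DS _ uD) /=.
move: cD => /forall_inP/(_ v vD)/forall_inP/(_ u uD).
apply: connect_sub => a b ab; apply: connect1; exact: relIn_sub DS _ _ ab.
Qed.

Lemma tree_sub (K D : {set T}) : treeIn m K -> D \subset K -> D != set0 -> connectedIn m D ->
  treeIn m D.
Proof.
move=> [_ sK _ aK] DK D0 cD; split => //.
  by move=> y z yD zD; apply: sK; apply: (subsetP DK).
move=> [s [us ss als cs]]; apply: aK; exists s; split => //.
  by apply/allP=> v /(allP als) /(subsetP DK).
exact: sub_cycle (relIn_sub DK) _ cs.
Qed.

Lemma pi_sub (K D : {set T}) : proper_intervalIn m K -> D \subset K -> proper_intervalIn m D.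
Proof.
move=> [sK [l [r [H1 H2 H3]]]] DK; split.
  by move=> y z yD zD; apply: sK; apply: (subsetP DK).
exists l, r; split.
- by move=> v /(subsetP DK); apply: H1.
- by move=> u v /(subsetP DK) uK /(subsetP DK) vK; apply: H2.
- by move=> u v /(subsetP DK) uK /(subsetP DK) vK; apply: H3.
Qed.

Lemma good_sub (S D : {set T}) : (forall K, component m S K -> proper_intervalIn m K \/ treeIn m K) ->
  D \subset S -> component m D D -> proper_intervalIn m D \/ treeIn m D.
Proof.
move=> HS DS /and4P[_ D0 cD _].
case/set0Pn: D0 => v vD.
have D0 : D != set0 by apply/set0Pn; exists v.
have [K [cK DK]] := comp_of DS cD vD.
case: (HS K cK) => H; [left; exact: pi_sub H DK | right; exact: tree_sub H DK D0 cD].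
Qed.


Lemma cyc_path (e : rel T) a t : cycle e (a :: t) -> path e a t.
Proof. by rewrite /= rcons_path => /andP[]. Qed.

Lemma path_tl (e : rel T) a b t : path e a (b :: t) -> path e b t.
Proof. by move=> /= /andP[]. Qed.

Lemma comp_self (S D : {set T}) : component m S D -> component m D D.
Proof.
move=> /and4P[_ D0 cD _]; apply/and4P; split => //.
by apply/forall_inP=> y _; apply/forall_inP=> z zD; apply/implyP.
Qed.

Lemma cyc_transfer (D A : {set T}) s : cycle (relIn m D) s ->
  all (fun v => v \in A) s -> uniq s -> 2 < size s -> acyclicIn m A -> False.
Proof.
move=> cs als us ss aA; apply: aA; exists s; split => //.
apply: (sub_in_cycle (P := mem A)) als cs.
by move=> a b aA bA /and3P[_ _ ab]; rewrite /relIn /= aA bA.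
Qed.

Variable x : T.
Variable C : {set T}.
Hypothesis Cp : pendant_tree m [set: T] x C.

Lemma pend_notx : x \notin C.
Proof.
case: Cp => _ /and4P[/subsetP H _ _ _] _ _.
by apply/negP=> /H; rewrite !inE eqxx.
Qed.

Lemma pend_closed y z : y \in C -> adj m y z -> z != x -> z \in C.
Proof.
case: Cp => _ /comp_closed H _ _ yC ayz zx.
by apply: (H y z yC) => //; rewrite !inE zx.
Qed.

Lemma pend_simple y z : y \in C -> m y z <= 1.
Proof.
move=> yC; have [h|h] := ltnP 0 (m y z); last exact: leq_trans h _.
case: Cp => _ _ _ [_ sC _ _]; apply: sC; first by rewrite !inE yC orbT.
case: (eqVneq z x) => [->|zx]; first by rewrite !inE eqxx.
by rewrite !inE (pend_closed yC h zx) orbT.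
Qed.

Lemma pend_nbr : exists a, a \in C /\ adj m x a.
Proof.
case: Cp => _ _ [C0 _ _ _] [_ _ /forall_inP cX _].
case/set0Pn: C0 => c cC.
have /forall_inP/(_ c) := cX x (setU11 _ _).
rewrite !inE cC orbT => /(_ isT) /connectP[[|a p] /= P1 E].
  by move: (pend_notx); rewrite -E cC.
case/andP: P1 => /and3P[_ aC xa] _.
exists a; split => //.
move: aC; rewrite !inE => /orP[/eqP ax|//].
by move: xa; rewrite -ax /adj mloop.
Qed.

Lemma pend_inv (D : {set T}) a p : path (relIn m D) a p -> x \notin a :: p ->
  forall v, v \in p -> (v \in C) = (a \in C).
Proof.
elim: p a => [|b p IH] a //= /andP[/and3P[_ _ ab] Hp].
rewrite !inE negb_or => /andP[ax]; rewrite negb_or => /andP[bx xp].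
rewrite eq_sym in ax; rewrite eq_sym in bx.
have eab : (b \in C) = (a \in C).
  apply/idP/idP => [bC|aC]; last exact: pend_closed aC ab bx.
  have ba : adj m b a by rewrite adjC.
  exact: pend_closed bC ba ax.
move=> v; rewrite inE => /orP[/eqP->//|vp].
rewrite -eab; apply: IH Hp _ v vp; by rewrite inE negb_or eq_sym bx.
Qed.

Lemma pend_path (D : {set T}) a p c : path (relIn m D) a p -> x \notin a :: p ->
  c \in a :: p -> c \in C -> all (fun v => v \in C) (a :: p).
Proof.
move=> Hp xp cp cC.
have aC : a \in C.
  move: cp; rewrite inE => /orP[/eqP<-//|cp].
  by rewrite -(pend_inv Hp xp cp).
apply/allP=> v; rewrite inE => /orP[/eqP->//|vp].
by rewrite (pend_inv Hp xp vp).
Qed.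

Lemma pend_cycle (D : {set T}) s c : uniq s -> 2 < size s -> cycle (relIn m D) s ->
  c \in s -> c \in C -> all (fun v => v \in x |: C) s.
Proof.
move=> us ss cs cs' cC.
case: (boolP (x \in s)) => xs.
  case: (rot_to xs) => i s' E.
  have cs2 : cycle (relIn m D) (x :: s') by rewrite -E rot_cycle.
  have us2 : uniq (x :: s') by rewrite -E rot_uniq.
  have ss2 : 2 < size (x :: s') by rewrite -E size_rot.
  have ms : forall v, (v \in s) = (v \in x :: s') by move=> v; rewrite -E mem_rot.
  case: s' E cs2 us2 ss2 ms => [|a t] E cs2 us2 ss2 ms //.
  have Hp : path (relIn m D) a t by apply: path_tl (cyc_path cs2).
  move: us2; rewrite /= => /andP[xat _].
  have cat' : c \in a :: t.
    move: cs'; rewrite ms inE => /orP[/eqP cx|//].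
    by move: pend_notx; rewrite -cx cC.
  have /allP H := pend_path Hp xat cat' cC.
  apply/allP=> v; rewrite ms inE => /orP[/eqP->|/H vC]; first by rewrite setU11.
  by rewrite inE vC orbT.
case: s us ss cs cs' xs => [|a t] // us ss cs cs' xs.
have Hp' := cyc_path cs.
have /allP H := pend_path Hp' xs cs' cC.
by apply/allP=> v /H vC; rewrite inE vC orbT.
Qed.

End Aux.


Theorem lemma21 (T : finType) (m : T -> T -> nat)
  (msym : forall y z, m y z = m z y) (mloop : forall y, m y y = 0)
  (k : nat) (x : T) (l : nat) (hl : 4 <= l) (C : 'I_l -> {set T})
  (Cinj : injective C)
  (Cpend : forall j, pendant_tree m [set: T] x (C j)) :
  let Z := \bigcup_(j < l | 3 <= j) C j in
  PITVD m [set: T] k <-> PITVD m (~: Z) k.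
Proof.
move=> Z.
have Cn j : x \notin C j := pend_notx (Cpend j).
have Cdisj i j v : v \in C i -> v \in C j -> i = j.
  move=> vi vj; apply: Cinj; apply/eqP; rewrite eqEsubset.
  have [_ ci ti _] := Cpend i; have [_ cj tj _] := Cpend j.
  case: ti => _ _ coi _; case: tj => _ _ coj _.
  have Si : C i \subset [set: T] :\ x by case/and4P: ci.
  have Sj : C j \subset [set: T] :\ x by case/and4P: cj.
  rewrite (conn_in_closed Si (comp_closed cj) coi vi vj).
  by rewrite (conn_in_closed Sj (comp_closed ci) coj vj vi).
have xZ : x \notin Z by apply/bigcupP => [[j _]]; apply/negP.
have inZ v : v \in Z -> exists2 j : 'I_l, 3 <= j & v \in C j.
  by case/bigcupP=> j j3 vj; exists j.
have compC (S D : {set T}) j v : component m S D -> x \notin D -> v \in D -> v \in C j ->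
    treeIn m D.
  move=> cD xD vD vj.
  have [_ cj tj _] := Cpend j.
  case/and4P: cD => _ D0 coD _.
  have DS : D \subset [set: T] :\ x.
    by apply/subsetP=> w wD; rewrite !inE andbT; apply: contraNneq xD => <-.
  have DC := conn_in_closed DS (comp_closed cj) coD vD vj.
  exact: tree_sub tj DC D0 coD.
split.
- case=> X [XV Xk Xs Xc]; exists (X :\: Z); split.
  + by apply/subsetP=> v; rewrite !inE => /andP[].
  + exact: leq_trans (subset_leq_card (subsetDl X Z)) Xk.
  + have sub : (~: Z) :\: (X :\: Z) \subset [set: T] :\: X.
      by apply/subsetP=> v; rewrite !inE; case: (v \in Z); case: (v \in X).
    by move=> y z /(subsetP sub) yS /(subsetP sub) zS; apply: Xs.
  + have sub : (~: Z) :\: (X :\: Z) \subset [set: T] :\: X.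
      by apply/subsetP=> v; rewrite !inE; case: (v \in Z); case: (v \in X).
    move=> D cD; apply: (good_sub msym Xc) (comp_self cD).
    by apply: subset_trans sub; case/and4P: cD.
- case=> X [XV Xk Xs Xc].
  have l0 : 0 < l by apply: leq_trans hl.
  have l1 : 1 < l by apply: leq_trans hl.
  have l2 : 2 < l by apply: leq_trans hl.
  pose i0 : 'I_l := Ordinal l0.
  pose i1 : 'I_l := Ordinal l1.
  pose i2 : 'I_l := Ordinal l2.
  pose W := C i0 :|: C i1 :|: C i2.
  have inW v : v \in W -> exists2 j : 'I_l, j < 3 & v \in C j.
    rewrite !inE => /orP[/orP[h|h]|h]; [exists i0 | exists i1 | exists i2] => //.
  have XZ v : v \in X -> v \notin Z.
    by move=> /(subsetP XV); rewrite inE.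
  have simpl_gen (Y : {set T}) :
      (forall v, v \notin Y -> (exists j, v \in C j) \/ v \in (~: Z) :\: X) ->
      simpleIn m ([set: T] :\: Y).
    move=> cl y z; rewrite !inE andbT => yY; rewrite andbT => zY.
    case: (cl y yY) => [[j yj]|yS]; first (idtac; exact: (pend_simple (Cpend j) z yj)).
    case: (cl z zY) => [[j zj]|zS].
      have := pend_simple (Cpend j) y zj. by rewrite (msym z y).
    exact: Xs.
  have comp_gen (Y : {set T}) D :
      (forall v, v \notin Y -> (exists j, v \in C j) \/ v \in (~: Z) :\: X) ->
      component m ([set: T] :\: Y) D -> x \notin D -> proper_intervalIn m D \/ treeIn m D.
    move=> cl cD xD.
    case: (boolP [exists v, (v \in D) && [exists j, v \in C j]]).
      case/existsP=> v /andP[vD /existsP[j vj]]; right; exact: compC cD xD vD vj.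
    rewrite negb_exists => /forallP H.
    apply: (good_sub msym Xc) (comp_self cD).
    apply/subsetP=> v vD.
    have vY : v \notin Y.
      by case/and4P: cD => /subsetP/(_ v vD); rewrite !inE andbT.
    case: (cl v vY) => [[j vj]|//].
    by move: (H v); rewrite vD /=; move/existsPn/(_ j); rewrite vj.
  case: (boolP ((x \in X) || [exists v, (v \in X) && (v \in W)])) => hA.
  + exists (x |: (X :\: W)).
    have cl v : v \notin x |: (X :\: W) -> (exists j, v \in C j) \/ v \in (~: Z) :\: X.
      rewrite in_setU1 in_setD negb_or negb_and negbK => /andP[_ H].
      case: (boolP (v \in Z)) => [/inZ [j _ vj]|vZ]; first by left; exists j.
      case: (boolP (v \in W)) => [/inW [j _ vj]|vW]; first by left; exists j.
      by right; rewrite in_setD in_setC vZ andbT; move: H; rewrite (negbTE vW).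
    split.
    * exact: subsetT.
    * apply: leq_trans Xk.
      case/orP: hA => [xX|/existsP[v /andP[vX vW]]].
        apply: subset_leq_card; apply/subsetP=> v; rewrite !inE.
        by case/orP=> [/eqP->//|/andP[]].
      have h1 := cardsD1 v X; rewrite vX in h1.
      have h2 := cardsU1 x (X :\: W).
      have h3 : #|X :\: W| <= #|X :\ v|.
        apply: subset_leq_card; apply/subsetP=> w; rewrite in_setD in_setD1.
        case/andP=> wW ->; rewrite andbT; apply: contraNneq wW => ->; exact: vW.
      have h4 : (x \notin X :\: W) <= 1 := leq_b1 _.
      lia.
    * exact: simpl_gen cl.
    * move=> D cD.
      have xD : x \notin D.
        by case/and4P: cD => /subsetP H _ _ _; apply/negP=> /H; rewrite in_setD in_setU1 eqxx.
      exact: comp_gen cl cD xD.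
  + rewrite negb_or negb_exists in hA; case/andP: hA => xX /forallP XW.
    have cl v : v \notin X -> (exists j, v \in C j) \/ v \in (~: Z) :\: X.
      move=> vX; case: (boolP (v \in Z)) => [/inZ [j _ vj]|vZ]; first by left; exists j.
      by right; rewrite !inE vZ vX.
    exists X; split => //.
    * exact: simpl_gen cl.
    * move=> D cD.
      case: (boolP (x \in D)) => xD; last exact: comp_gen cl cD xD.
      right.
      have [K0 [cK0 xK0]] : exists K, component m ((~: Z) :\: X) K /\ [set x] \subset K.
        apply: (comp_of msym _ _ (set11 x)).
        - by rewrite sub1set in_setD in_setC xZ xX.
        - apply/forall_inP=> u; rewrite in_set1 => /eqP->.
          apply/forall_inP=> w; rewrite in_set1 => /eqP->; exact: connect0.
      rewrite sub1set in xK0.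
      have sub (i : 'I_l) : i < 3 -> C i \subset W -> x |: C i \subset K0.
        move=> i3 iW; have [_ _ _ [_ _ coi _]] := Cpend i.
        apply: (conn_in_closed _ (comp_closed cK0) coi (setU11 x (C i)) xK0).
        apply/subsetP=> v; rewrite in_setU1 => /orP[/eqP->|vi].
          by rewrite in_setD in_setC xZ xX.
        rewrite in_setD in_setC.
        have vX : v \notin X by move: (XW v); rewrite (subsetP iW _ vi) andbT.
        rewrite vX /=; apply/negP=> /inZ [j j3 vj].
        have eij := Cdisj i j v vi vj.
        by move: i3; rewrite eij ltnNge j3.
      have W0 : C i0 \subset W by apply/subsetP=> v vi; rewrite /W !in_setU vi.
      have W1 : C i1 \subset W by apply/subsetP=> v vi; rewrite /W !in_setU vi !orbT.
      have W2 : C i2 \subset W by apply/subsetP=> v vi; rewrite /W !in_setU vi !orbT.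
      have S0 := sub i0 isT W0.
      have S1 := sub i1 isT W1.
      have S2 := sub i2 isT W2.
      have [a0 [a0C xa0]] := pend_nbr mloop (Cpend i0).
      have [a1 [a1C xa1]] := pend_nbr mloop (Cpend i1).
      have [a2 [a2C xa2]] := pend_nbr mloop (Cpend i2).
      have inK (i : 'I_l) a : x |: C i \subset K0 -> a \in C i -> a \in K0.
        by move=> H ai; apply: (subsetP H); rewrite in_setU1 ai orbT.
      have K0a0 := inK _ _ S0 a0C.
      have K0a1 := inK _ _ S1 a1C.
      have K0a2 := inK _ _ S2 a2C.
      have nadj (i j : 'I_l) a b : i != j -> a \in C i -> b \in C j -> ~~ adj m a b.
        move=> ij ai bj; apply/negP=> ab.
        have bx : b != x by apply: contraNneq (Cn j) => <-.
        have := pend_closed (Cpend i) ai ab bx => bi.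
        by move: ij; rewrite (Cdisj i j b bi bj) eqxx.
      have neq (i j : 'I_l) a b : i != j -> a \in C i -> b \in C j -> a != b.
        move=> ij ai bj; apply/eqP=> E; move: ai; rewrite E => bi.
        by move: ij; rewrite (Cdisj i j b bi bj) eqxx.
      have nx (i : 'I_l) a : a \in C i -> x != a.
        by move=> ai; apply: contraNneq (Cn i) => ->.
      have n01 : i0 != i1 by apply/eqP=> /(congr1 val).
      have n02 : i0 != i2 by apply/eqP=> /(congr1 val).
      have n12 : i1 != i2 by apply/eqP=> /(congr1 val).
      case: (Xc K0 cK0) => [[_ [lf [rf [H1 H2 H3]]]] | tK0].
        exfalso.
        have I0 := (H2 x a0 xK0 K0a0 (nx _ _ a0C)).1 xa0.
        have I1 := (H2 x a1 xK0 K0a1 (nx _ _ a1C)).1 xa1.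
        have I2 := (H2 x a2 xK0 K0a2 (nx _ _ a2C)).1 xa2.
        have J01 : ~ (lf a0 <= rf a1 /\ lf a1 <= rf a0)%R.
          by move/(H2 a0 a1 K0a0 K0a1 (neq _ _ _ _ n01 a0C a1C)).2; apply/negP; exact: nadj n01 a0C a1C.
        have J02 : ~ (lf a0 <= rf a2 /\ lf a2 <= rf a0)%R.
          by move/(H2 a0 a2 K0a0 K0a2 (neq _ _ _ _ n02 a0C a2C)).2; apply/negP; exact: nadj n02 a0C a2C.
        have J12 : ~ (lf a1 <= rf a2 /\ lf a2 <= rf a1)%R.
          by move/(H2 a1 a2 K0a1 K0a2 (neq _ _ _ _ n12 a1C a2C)).2; apply/negP; exact: nadj n12 a1C a2C.
        case: I0 => I0a I0b; case: I1 => I1a I1b; case: I2 => I2a I2b.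
        exact: (claw (H1 a0 K0a0) (H1 a1 K0a1) (H1 a2 K0a2) I0a I0b I1a I1b I2a I2b
                 J01 J02 J12 (H3 x a0 xK0 K0a0) (H3 x a1 xK0 K0a1) (H3 x a2 xK0 K0a2)).
      case/and4P: cD => DS D0 coD _.
      have DK : D \subset K0 :|: Z.
        apply: (conn_in_closed DS _ coD xD); last by rewrite in_setU xK0.
        move=> y z yK zS ayz.
        case: (boolP (z \in Z)) => zZ; first by rewrite in_setU zZ orbT.
        have zX : z \notin X by move: zS; rewrite in_setD in_setT andbT.
        move: yK; rewrite in_setU => /orP[yK|/inZ [j j3 yj]].
          by rewrite in_setU (comp_closed cK0 yK _ ayz) // in_setD in_setC zZ zX.
        case: (eqVneq z x) => [->|zx]; first by rewrite in_setU xK0.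
        have zj := pend_closed (Cpend j) yj ayz zx.
        by rewrite in_setU; apply/orP; right; apply/bigcupP; exists j.
      split => //.
      - move=> y z yD zD; apply: (simpl_gen X cl); exact: (subsetP DS).
      - move=> [s [us ss als cs]].
        case: (boolP (has (fun v => v \in Z) s)) => [/hasP [c cs' /inZ [j _ cj]] | /hasPn hZ].
          have alls := pend_cycle msym (Cpend j) us ss cs cs' cj.
          have [_ _ _ [_ _ _ acj]] := Cpend j.
          exact: cyc_transfer cs alls us ss acj.
        have [_ _ _ acK] := tK0.
        apply: (cyc_transfer cs _ us ss acK).
        apply/allP => v vs; have vD := (allP als) v vs.
        have := subsetP DK v vD; rewrite in_setU => /orP[//|vZ].
        by move: (hZ v vs); rewrite vZ.
Qed.
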